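(* Consider the common support-set model described in the context with $J=T$, let $h\ge1$, $m\ge0$, and let $\mathsf p_1,\dots,\mathsf p_h,\mathsf q_1,\dots,\mathsf q_{m+1}$ be distinct sensors. Then (whenever the conditioning events have positive probability) $$\Pr\Big(i\in\mathcal J\ \Big|\ i\in\bigcap_{l=1}^{h}\hat{\mathcal T}_{\mathsf p_l},\ i\in\bigcap_{l=1}^{m}\hat{\mathcal T}_{\mathsf q_l}^{\complement}\Big)\ \ge\ \Pr\Big(i\in\mathcal J\ \Big|\ i\in\bigcap_{l=1}^{h-1}\hat{\mathcal T}_{\mathsf p_l},\ i\in\bigcap_{l=1}^{m+1}\hat{\mathcal T}_{\mathsf q_l}^{\complement}\Big).$$
   Context: Let $N>T\ge1$ be integers and $\Omega=\{1,\dots,N\}$; complements are taken in $\Omega$. A finite set $\mathcal L$ of sensors is given. Common support-set model: every sensor $\mathsf p\in\mathcal L$ has the same fixed true support set $\mathcal T_{\mathsf p}=\mathcal J\subseteq\Omega$ with $|\mathcal J|=J=T$. Each sensor has a random estimated support set $\hat{\mathcal T}_{\mathsf p}\subseteq\Omega$. A random index $i$ is uniformly distributed on $\Omega$ and independent of all estimates. System model: there is $\epsilon$ with $0\le\epsilon\le (N-T)/N$, common to all sensors, such that for every sensor $\mathsf p$ and every $j\in\Omega$, $\Pr(j\in\hat{\mathcal T}_{\mathsf p})=1-\epsilon$ if $j\in\mathcal T_{\mathsf p}$ and $\Pr(j\in\hat{\mathcal T}_{\mathsf p})=\frac{T}{N-T}\epsilon$ if $j\notin\mathcal T_{\mathsf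 p}$ (so $\Pr(i\in\hat{\mathcal T}_{\mathsf p})=T/N$, detection probability $1-\epsilon$, miss probability $\epsilon$, false-alarm probability $\frac{T}{N-T}\epsilon$). For each fixed $j\in\Omega$, the events $\{j\in\hat{\mathcal T}_{\mathsf p}\}$, $\mathsf p\in\mathcal L$, are mutually independent. *)

(* Defs.v *)
From HB Require Import structures.
From mathcomp Require Import all_boot all_order all_algebra.
From mathcomp Require Import all_classical all_reals all_analysis.
Set Implicit Arguments. Unset Strict Implicit. Unset Printing Implicit Defensive.
Import Order.TTheory GRing.Theory Num.Theory.
Local Open Scope classical_set_scope.
Local Open Scope ring_scope.

Definition pr d (Omega : measurableType d) (R : realType)
  (P : probability Omega R) (A : set Omega) : R := fine (P A).

Definition cond_pr d (Omega : measurableType d) (R : realType)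
  (P : probability Omega R) (A B : set Omega) : R :=
  pr P (A `&` B) / pr P B.

(* Main.v *)
Require Import Defs.
From HB Require Import structures.
From mathcomp Require Import all_boot all_order all_algebra.
From mathcomp Require Import all_classical all_reals all_analysis.
From mathcomp Require Import ring lra.
Import Order.TTheory GRing.Theory Num.Theory.
Local Open Scope classical_set_scope.
Local Open Scope ring_scope.

Lemma prDI_ d (Omega : measurableType d) (R : realType) (P : probability Omega R)
  (A B : set Omega) : measurable A -> measurable B ->
  pr P A = pr P (A `\` B) + pr P (A `&` B).
Proof.
move=> mA mB; rewrite /pr (measureDI P mA mB) fineD //.
- by apply: fin_num_measure; exact: measurableD.
- by apply: fin_num_measure; exact: measurableI.
Qed.

Lemma prext_ d (Omega : measurableType d) (R : realType) (P : probability Omega R)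
  (A B : set Omega) : (forall w, A w <-> B w) -> pr P A = pr P B.
Proof. by move=> H; congr pr; apply/funext => w; apply/propext; exact: H. Qed.

Lemma pr0_ d (Omega : measurableType d) (R : realType) (P : probability Omega R)
  (A : set Omega) : (forall w, ~ A w) -> pr P A = 0.
Proof.
move=> H; rewrite (@prext_ _ _ _ P A set0); first by rewrite /pr measure0.
by move=> w; split => // /H.
Qed.

Theorem proposition3
  (R : realType) (d : measure_display) (Omega : measurableType d)
  (P : probability Omega R)
  (N T : nat) (L : finType)
  (J : {set 'I_N})
  (est : L -> Omega -> {set 'I_N})   (* estimated support sets *)
  (idx : Omega -> 'I_N)              (* the random index i *)
  (eps : R) :
  (1 <= T)%N -> (T < N)%N -> #|J| = T ->
  0 <= eps -> eps <= (N - T)%:R / N%:R ->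
  (* all events determined by (i, estimates) are measurable *)
  (forall Q : pred ('I_N * {ffun L -> {set 'I_N}}),
      measurable [set w | Q (idx w, [ffun p => est p w])]) ->
  (* detection / false-alarm probabilities *)
  (forall (p : L) (j : 'I_N),
      pr P [set w | j \in est p w] =
        (if j \in J then 1 - eps else (T%:R / (N - T)%:R) * eps)) ->
  (* for fixed j, the events {j in est p}, p in L, are mutually independent *)
  (forall (j : 'I_N) (S : {set L}),
      pr P [set w | forall p, p \in S -> j \in est p w] =
        \prod_(p in S) pr P [set w | j \in est p w]) ->
  (* i uniform on Omega *)
  (forall j : 'I_N, pr P [set w | idx w = j] = N%:R^-1) ->
  (* i independent of all estimates *)
  (forall (j : 'I_N) (Q : pred {ffun L -> {set 'I_N}}),
      pr P [set w | idx w = j /\ Q [ffun p => est p w]] =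
        pr P [set w | idx w = j] * pr P [set w | Q [ffun p => est p w]]) ->
  forall (h m : nat) (ps : 'I_h -> L) (qs : 'I_m.+1 -> L),
  (1 <= h)%N ->
  injective ps -> injective qs -> (forall a b, ps a <> qs b) ->
  let A  := [set w | idx w \in J] in
  let B1 := [set w | (forall l : 'I_h, idx w \in est (ps l) w) /\
                     (forall l : 'I_m.+1, (l < m)%N -> idx w \notin est (qs l) w)] in
  let B2 := [set w | (forall l : 'I_h, (l < h.-1)%N -> idx w \in est (ps l) w) /\
                     (forall l : 'I_m.+1, idx w \notin est (qs l) w)] in
  0 < pr P B1 -> 0 < pr P B2 ->
  cond_pr P A B1 >= cond_pr P A B2.
Proof.
move=> T1 TN cJ eps0 epsle Hmeas Hdet Hind Hunif Hidx.
have prext := @prext_ _ _ _ P.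
have prDI := @prDI_ _ _ _ P.
set c := fun j : 'I_N => if j \in J then 1 - eps else T%:R / (N - T)%:R * eps.
have mX : forall X : 'I_N -> (L -> {set 'I_N}) -> Prop,
    measurable [set w | X (idx w) (fun p => est p w)].
  move=> X; have := Hmeas (fun z => `[< X z.1 (fun p => z.2 p) >]).
  congr measurable; apply/funext => w /=; rewrite asboolE.
  by congr X; apply/funext => p; rewrite ffunE.
have Hprod : forall j n (S S' : {set L}), #|S'| = n ->
    (forall p, p \in S -> p \notin S') ->
    pr P [set w | (forall p, p \in S -> j \in est p w) /\
                  (forall p, p \in S' -> j \notin est p w)] =
    c j ^+ #|S| * (1 - c j) ^+ n.
  move=> j n; elim: n => [|n IH] S S' hc hd.
    move/cards0_eq: hc => ->.
    rewrite (prext _ [set w | forall p, p \in S -> j \in est p w]); last first.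
      by move=> w /=; split => [[]|H] //; split => // p; rewrite inE.
    rewrite Hind; under eq_bigr => p _ do rewrite Hdet.
    by rewrite prodr_const expr0 mulr1.
  have [q qS'] : exists q, q \in S' by apply/set0Pn; rewrite -card_gt0 hc.
  set S'' := S' :\ q.
  have cS'' : #|S''| = n by move: hc; rewrite (cardsD1 q) qS' add1n => -[].
  have qS : q \notin S by apply/negP => /hd; rewrite qS'.
  have := prDI _ _ (mX (fun i e => (forall p, p \in S -> j \in e p) /\
                  (forall p, p \in S'' -> j \notin e p)))
                  (mX (fun i e => j \in e q)).
  rewrite (IH S S'') //; last first.
    by move=> p /hd; apply: contra; rewrite in_setD1 => /andP[].
  rewrite [X in _ = _ + X](prext _ [set w | (forall p, p \in q |: S -> j \in est p w) /\
                  (forall p, p \in S'' -> j \notin est p w)]); last first.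
    move=> w /=; split.
      by move=> [[H1 H2] H3]; split => // p; rewrite in_setU1 => /orP[/eqP->|/H1] //.
    move=> [H1 H2]; split; last by apply: H1; rewrite setU11.
    by split => // p pS; apply: H1; rewrite in_setU1 pS orbT.
  rewrite [X in _ = X + _](prext _ [set w | (forall p, p \in S -> j \in est p w) /\
                  (forall p, p \in S' -> j \notin est p w)]); last first.
    move=> w /=; split.
      move=> [[H1 H2] H3]; split => // p pS'.
      case: (eqVneq p q) => [->|pq]; first by apply/negP.
      by apply: H2; rewrite in_setD1 pq.
    move=> [H1 H2]; split; last by apply/negP; apply: H2.
    by split => // p; rewrite in_setD1 => /andP[_]; apply: H2.
  rewrite (IH (q |: S) S'') //; last first.
    move=> p; rewrite in_setU1 => /orP[/eqP->|]; first by rewrite setD11.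
    by move=> /hd; apply: contra; rewrite in_setD1 => /andP[].
  rewrite cardsU1 qS add1n => E.
  rewrite -[LHS](addrK (c j ^+ #|S|.+1 * (1 - c j) ^+ n)) -E !exprS; ring.
have Hsum : forall X : 'I_N -> (L -> {set 'I_N}) -> Prop,
    pr P [set w | X (idx w) (fun p => est p w)] =
    \sum_(j < N) N%:R^-1 * pr P [set w | X j (fun p => est p w)].
  move=> X.
  have Hs : forall s : seq 'I_N, uniq s ->
      pr P [set w | idx w \in s /\ X (idx w) (fun p => est p w)] =
      \sum_(j <- s) N%:R^-1 * pr P [set w | X j (fun p => est p w)].
    elim => [|x s IH] /=.
      by move=> _; rewrite big_nil; apply: pr0_ => w [].
    case/andP => xs us; rewrite big_cons.
    rewrite (prDI _ _ (mX (fun i e => i \in x :: s /\ X i e)) (mX (fun i e => i = x))).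
    rewrite addrC; congr (_ + _); last first.
      rewrite -IH //; apply: prext => w /=; split.
        move=> [[]]; rewrite in_cons => /orP[/eqP -> //|] ? ? ?; by split.
      move=> [H1 H2]; split; first by rewrite in_cons H1 orbT.
      by move=> E; move: xs; rewrite -E H1.
    have H := Hidx x (fun f => `[< X x (fun p => f p) >]).
    rewrite Hunif in H.
    have ffE : forall w, (fun p => [ffun p0 => est p0 w] p) = (fun p => est p w).
      by move=> w; apply/funext => p; rewrite ffunE.
    have -> : pr P [set w | X x (fun p => est p w)] =
        pr P [set w | `[< X x (fun p => [ffun p0 => est p0 w] p) >]].
      by apply: prext => w /=; rewrite asboolE ffE.
    rewrite -H; apply: prext => w /=; rewrite asboolE ffE.
    split; first by move=> [[_ H'] E]; split => //; rewrite -E.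
    by move=> [E H']; rewrite E; split => //; split; [rewrite mem_head|exact: H'].
  have := Hs (enum 'I_N) (enum_uniq _); rewrite big_enum /= => E.
  transitivity (pr P [set w | idx w \in enum 'I_N /\ X (idx w) (fun p => est p w)]).
    by apply: prext => w /=; split => [H|[]] //; split => //; rewrite mem_enum.
  by rewrite E; apply: eq_bigl => i.
have HEv : forall (G : pred 'I_N) (S S' : {set L}),
    (forall p, p \in S -> p \notin S') ->
    pr P [set w | G (idx w) /\ (forall p, p \in S -> idx w \in est p w) /\
                  (forall p, p \in S' -> idx w \notin est p w)] =
    \sum_(j < N | G j) N%:R^-1 * (c j ^+ #|S| * (1 - c j) ^+ #|S'|).
  move=> G S S' hd.
  rewrite (Hsum (fun i e => G i /\ (forall p, p \in S -> i \in e p) /\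
                  (forall p, p \in S' -> i \notin e p))) [RHS]big_mkcond /=.

  apply: eq_bigr => j _; case: ifP => Gj.
    rewrite -(Hprod j _ S S') //; congr (_ * _); apply: prext => w /=.
    by split; [case|move=> ?; split].
  by rewrite pr0_ ?mulr0 // => w [].
move=> [//|k] m ps qs _ ips iqs pq A B1 B2 pB1 pB2.
have ordE : forall n (l : 'I_n.+1), (l != ord_max) = (l < n)%N.
  by move=> n l; rewrite -(inj_eq val_inj) /= ltn_neqAle -ltnS ltn_ord andbT.
set S1 := ([set ps l | l in [set: 'I_k.+1]])%SET.
set S1' := ([set qs l | l in [set~ (@ord_max m)]])%SET.
set S2 := ([set ps l | l in [set~ (@ord_max k)]])%SET.
set S2' := ([set qs l | l in [set: 'I_m.+1]])%SET.
have cS1 : #|S1| = k.+1 by rewrite card_imset // cardsT card_ord.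
have cS1' : #|S1'| = m by rewrite card_imset // cardsC1 card_ord.
have cS2 : #|S2| = k by rewrite card_imset // cardsC1 card_ord.
have cS2' : #|S2'| = m.+1 by rewrite card_imset // cardsT card_ord.
have disj : forall (X Y : {pred _}) p, p \in [set ps l | l in X]%SET ->
    p \notin [set qs l | l in Y]%SET.
  move=> X Y p /imsetP[a _ ->]; apply/imsetP => -[b _ E]; exact: pq a b E.
have eB1 : forall (G : pred 'I_N), pr P [set w | G (idx w) /\ B1 w] =
    \sum_(j < N | G j) N%:R^-1 * (c j ^+ k.+1 * (1 - c j) ^+ m).
  move=> G; rewrite -cS1 -cS1' -HEv; last by move=> p; exact: disj.
  apply: prext => w /=; split.
    move=> [Gw [H1 H2]]; split => //; split.
      by move=> p /imsetP[l _ ->].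
    by move=> p /imsetP[l]; rewrite in_setC1 ordE => lm ->; apply: H2.
  move=> [Gw [H1 H2]]; split => //; split.
    by move=> l; apply: H1; apply/imsetP; exists l; rewrite ?inE.
  by move=> l lm; apply: H2; apply/imsetP; exists l; rewrite // in_setC1 ordE.
have eB2 : forall (G : pred 'I_N), pr P [set w | G (idx w) /\ B2 w] =
    \sum_(j < N | G j) N%:R^-1 * (c j ^+ k * (1 - c j) ^+ m.+1).
  move=> G; rewrite -cS2 -cS2' -HEv; last by move=> p; exact: disj.
  apply: prext => w /=; split.
    move=> [Gw [H1 H2]]; split => //; split.
      by move=> p /imsetP[l]; rewrite in_setC1 ordE => lm ->; apply: H1.
    by move=> p /imsetP[l _ ->].
  move=> [Gw [H1 H2]]; split => //; split.
    by move=> l lm; apply: H1; apply/imsetP; exists l; rewrite // in_setC1 ordE.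
  by move=> l; apply: H2; apply/imsetP; exists l; rewrite ?inE.
have x1E := eB1 (fun j => j \in J).
have y1E := eB1 predT.
have x2E := eB2 (fun j => j \in J).
have y2E := eB2 predT.
set n := N%:R : R. set t := T%:R : R. set nt := (N - T)%:R : R.
set a := 1 - eps. set bb := t / nt * eps.
have e1a : 1 - a = eps by rewrite /a; ring.
have cardCJ : #|~: J| = (N - T)%N by have := cardsC J; rewrite card_ord cJ => E; rewrite -[X in (X - _)%N]E addKn.
have SJ : forall e1 e2, \sum_(j < N | j \in J) N%:R^-1 * (c j ^+ e1 * (1 - c j) ^+ e2)
    = t * (n^-1 * (a ^+ e1 * eps ^+ e2)).
  move=> e1 e2; rewrite (eq_bigr (fun=> n^-1 * (a ^+ e1 * eps ^+ e2))); last first.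
    by move=> j jJ; rewrite /c jJ -/a e1a.
  by rewrite sumr_const cJ -mulr_natl.
have ST : forall e1 e2, \sum_(j < N | predT j) N%:R^-1 * (c j ^+ e1 * (1 - c j) ^+ e2)
    = t * (n^-1 * (a ^+ e1 * eps ^+ e2)) + nt * (n^-1 * (bb ^+ e1 * (1 - bb) ^+ e2)).
  move=> e1 e2; rewrite (bigID (fun j => j \in J)) /= SJ; congr (_ + _).
  rewrite (eq_bigl (fun j => j \in ~: J)); last by move=> j; rewrite !inE.
  rewrite (eq_bigr (fun=> n^-1 * (bb ^+ e1 * (1 - bb) ^+ e2))); last first.
    by move=> j; rewrite !inE /c => /negbTE ->.
  by rewrite sumr_const cardCJ -mulr_natl.
rewrite /cond_pr.
have -> : A `&` B1 = [set w | idx w \in J /\ B1 w] by [].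
have -> : A `&` B2 = [set w | idx w \in J /\ B2 w] by [].
have eB1' : pr P B1 = pr P [set w | predT (idx w) /\ B1 w].
  by apply: prext => w /=; split => [|[]].
have eB2' : pr P B2 = pr P [set w | predT (idx w) /\ B2 w].
  by apply: prext => w /=; split => [|[]].
move: pB1 pB2; rewrite eB1' eB2' x1E y1E x2E y2E !SJ !ST => pB1 pB2.
rewrite ler_pdivlMr // mulrAC ler_pdivrMr //.
rewrite !exprS.
have n0 : 0 < n by rewrite ltr0n; apply: leq_ltn_trans TN.
have nt0 : 0 < nt by rewrite ltr0n subn_gt0.
have t0 : 0 <= t by rewrite ler0n.
have hn : n = nt + t by rewrite -natrD subnK // ltnW.
have en : eps * n <= nt by rewrite -ler_pdivlMr.
have abb : 0 <= a - bb.
  have -> : a - bb = (nt - eps * n) / nt.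
    rewrite /a /bb hn; field; exact: lt0r_neq0.
  by apply: divr_ge0; [rewrite subr_ge0|exact: ltW].
have bb0 : 0 <= bb by apply: mulr_ge0 => //; apply: divr_ge0 => //; exact: ltW.
have a1 : a <= 1 by rewrite /a lerBlDr lerDl.
have b1 : 0 <= 1 - bb by lra.
set Ua := a ^+ k. set Ue := eps ^+ m. set Vb := bb ^+ k. set Vc := (1 - bb) ^+ m.
have Ua0 : 0 <= Ua by apply: exprn_ge0; lra.
have Ue0 : 0 <= Ue by exact: exprn_ge0.
have Vb0 : 0 <= Vb by exact: exprn_ge0.
have Vc0 : 0 <= Vc by exact: exprn_ge0.
rewrite -subr_ge0.
set Ni := n^-1.
have Ni0 : 0 <= Ni by rewrite invr_ge0 ltW.
have -> : t * (Ni * (a * Ua * Ue)) * (t * (Ni * (Ua * (eps * Ue))) + nt * (Ni * (Vb * ((1 - bb) * Vc)))) -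
  t * (Ni * (Ua * (eps * Ue))) * (t * (Ni * (a * Ua * Ue)) + nt * (Ni * (bb * Vb * Vc)))
  = t * nt * (Ni * Ni) * (Ua * Ue) * (Vb * Vc) * ((a - bb) + bb * (1 - a - eps)).
  ring.
rewrite e1a subrr mulr0 addr0.
by rewrite !mulr_ge0 // ltW.
Qed.
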